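(* Let $\alpha>0$ and $F(t)=(1+t^{-\alpha})^{-1}$ for $t>0$, $F(0)=0$. A function $G\in\Delta_+$ is in the Boolean max-domain of attraction of $F$ if and only if the function $t\mapsto 1-\exp\big(1-G(t)^{-1}\big)$ is regularly varying of exponent $-\alpha$.
   Context: $\Delta_+$ is the set of functions $F:[0,\infty)\to[0,1]$ that are nondecreasing, right continuous and satisfy $\lim_{t\to\infty}F(t)=1$. Define $\sqcap$ on $[0,1]$ by $(x\sqcap y)^{-1}-1=(x^{-1}-1)+(y^{-1}-1)$ (conventions $0^{-1}=+\infty$, $(+\infty)^{-1}=0$, and $\exp(1-0^{-1})=0$), and the Boolean max-convolution of $F,G\in\Delta_+$ by $(F\boxed{\vee}G)(t)=F(t)\sqcap G(t)$; $G^{\boxed{\vee}n}$ denotes the $n$-fold Boolean max-convolution of $G$ with itself. $G\in\Delta_+$ is in the Boolean max-domain of attraction of $F\in\Delta_+$ if there exist $a_n>0$ ($n\in\mathbb{N}$) with $G^{\boxed{\vee}n}(a_nt)\to F(t)$ as $n\to\infty$ for all $t\ge0$. A function $h$ on $[0,\infty)$ is regularly varying of exponent $-\alpha$ if $\lim_{t\to+\infty}h(tx)/h(t)=x^{-\alpha}$ for all $x>0$. *)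

(* Defs.v *)
From Stdlib Require Import Reals Lra.
From Coquelicot Require Import Coquelicot.
Open Scope R_scope.

(* Delta_+ : F : [0,oo) -> [0,1], nondecreasing, right continuous, F(t) -> 1.
   Functions are R -> R; only values on [0,oo) matter. *)
Definition Delta_plus (F : R -> R) : Prop :=
  (forall t, 0 <= t -> 0 <= F t <= 1) /\
  (forall s t, 0 <= s -> s <= t -> F s <= F t) /\
  (forall t, 0 <= t -> filterlim F (at_right t) (locally (F t))) /\
  is_lim F p_infty 1.

(* Boolean meet on [0,1]: (x ⊓ y)^-1 - 1 = (x^-1 - 1) + (y^-1 - 1),
   with 0^-1 = +oo, (+oo)^-1 = 0. *)
Definition bmeet (x y : R) : R :=
  if Req_EM_T x 0 then 0
  else if Req_EM_T y 0 then 0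
  else / ((/ x - 1) + (/ y - 1) + 1).

Fixpoint bpow (n : nat) (x : R) : R :=
  match n with
  | O => 1
  | S m => bmeet x (bpow m x)
  end.

Definition bmaxconv_pow (n : nat) (G : R -> R) : R -> R :=
  fun t => bpow n (G t).

Definition in_BMDA (G F : R -> R) : Prop :=
  exists a : nat -> R, (forall n, 0 < a n) /\
    forall t, 0 <= t -> is_lim_seq (fun n => bmaxconv_pow n G (a n * t)) (F t).

Definition reg_var (alpha : R) (h : R -> R) : Prop :=
  forall x, 0 < x -> is_lim (fun t => h (t * x) / h t) p_infty (Rpower x (- alpha)).

Definition F_alpha (alpha : R) (t : R) : R :=
  if Rlt_dec 0 t then / (1 + Rpower t (- alpha)) else 0.

(* t |-> 1 - exp(1 - G(t)^{-1}), with exp(1 - 0^{-1}) = 0 *)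
Definition h_of (G : R -> R) (t : R) : R :=
  if Req_EM_T (G t) 0 then 1 else 1 - exp (1 - / G t).

(* Main.v *)
Require Import Defs.
From Stdlib Require Import Reals Lra Lia Classical ClassicalEpsilon.
From Coquelicot Require Import Coquelicot.
Open Scope R_scope.

Definition hh (x:R) : R := if Req_EM_T x 0 then 1 else 1 - exp (1 - / x).

Lemma h_of_hh G t : h_of G t = hh (G t).
Proof. reflexivity. Qed.

Lemma bpow_zero n : bpow (S n) 0 = 0.
Proof. simpl. unfold bmeet. destruct (Req_EM_T 0 0); lra. Qed.

Lemma v_nonneg x : 0 < x <= 1 -> 0 <= /x - 1.
Proof.
  intros [H1 H2]. assert (1 <= / x).
  { rewrite <- Rinv_1. apply Rinv_le_contravar; lra. } lra.
Qed.

Lemma bpow_formula x n : 0 < x <= 1 -> bpow n x = / (1 + INR n * (/x - 1)).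
Proof.
  intros Hx. pose proof (v_nonneg x Hx) as Hv.
  induction n as [|m IH].
  - simpl. rewrite Rmult_0_l, Rplus_0_r, Rinv_1. reflexivity.
  - simpl bpow. unfold bmeet. rewrite IH.
    assert (Hm : 0 <= INR m) by apply pos_INR.
    assert (Hp : 0 < 1 + INR m * (/x - 1)) by nra.
    destruct (Req_EM_T x 0) as [e|_]; [lra|].
    destruct (Req_EM_T (/ (1 + INR m * (/ x - 1))) 0) as [e|_].
    { exfalso. apply (Rinv_neq_0_compat _ (Rgt_not_eq _ _ Hp)). exact e. }
    rewrite Rinv_inv. f_equal. rewrite S_INR. ring.
Qed.

Lemma hh_bounds x : 0 < x <= 1 ->
  0 <= hh x < 1 /\ hh x <= /x - 1 /\ (/x - 1) * (1 - hh x) <= hh x.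
Proof.
  intros Hx. pose proof (v_nonneg x Hx) as Hv.
  unfold hh. destruct (Req_EM_T x 0) as [e|_]; [lra|].
  set (v := /x - 1) in *.
  replace (1 - / x) with (- v) by (unfold v; ring).
  pose proof (exp_ineq1_le (-v)). pose proof (exp_ineq1_le v).
  pose proof (exp_pos (-v)). pose proof (exp_pos v).
  assert (E : exp v * exp (-v) = 1).
  { rewrite <- exp_plus. replace (v + - v) with 0 by ring. apply exp_0. }
  assert (exp (-v) <= 1).
  { rewrite <- exp_0. destruct (Req_dec v 0) as [->|n]. rewrite Ropp_0; lra.
    left. apply exp_increasing. lra. }
  repeat split; try lra.
  nra.
Qed.

Lemma hh_range x : 0 <= x <= 1 -> 0 <= hh x <= 1.
Proof.
  intros Hx. destruct (Req_dec x 0) as [->|n].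
  - unfold hh. destruct (Req_EM_T 0 0); lra.
  - assert (0 < x <= 1) by lra. pose proof (hh_bounds x H). lra.
Qed.

Lemma hh_one : hh 1 = 0.
Proof. unfold hh. destruct (Req_EM_T 1 0); [lra|]. rewrite Rinv_1.
  replace (1-1) with 0 by ring. rewrite exp_0. ring. Qed.

Lemma hh_mono x y : 0 <= x <= y -> y <= 1 -> hh y <= hh x.
Proof.
  intros Hxy Hy. destruct (Req_dec x 0) as [->|n].
  - unfold hh at 2. destruct (Req_EM_T 0 0); [|lra].
    pose proof (hh_range y). lra.
  - unfold hh. destruct (Req_EM_T x 0); [lra|]. destruct (Req_EM_T y 0); [lra|].
    assert (/ y <= / x) by (apply Rinv_le_contravar; lra).
    assert (exp (1 - / x) <= exp (1 - / y)).
    { destruct (Req_dec x y) as [->|m]. lra. left. apply exp_increasing.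
      assert (/ y < / x) by (apply Rinv_lt_contravar; nra). lra. }
    lra.
Qed.

Lemma inv_INR_lim : is_lim_seq (fun n => / INR n) 0.
Proof.
  pose proof (is_lim_seq_inv _ _ is_lim_seq_INR) as H.
  simpl in H. apply H. discriminate.
Qed.

Lemma conv_fwd (x : nat -> R) (c : R) : (forall n, 0 <= x n <= 1) -> 0 < c ->
  is_lim_seq (fun n => bpow n (x n)) (/(1+c)) -> is_lim_seq (fun n => INR n * hh (x n)) c.
Proof.
  intros Hx Hc H.
  remember (/(1+c)) as L eqn:EL.
  assert (HL : 0 < L) by (rewrite EL; apply Rinv_0_lt_compat; lra).
  assert (Hw : is_lim_seq (fun n => / bpow n (x n) - 1) c).
  { replace c with (/ L - 1) by (rewrite EL, Rinv_inv; ring).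
    apply is_lim_seq_minus'; [|apply is_lim_seq_const].
    pose proof (is_lim_seq_inv _ _ H) as H'. simpl in H'. apply H'.
    intro e. injection e. lra. }
  pose proof H as Hs. apply is_lim_seq_spec in Hs.
  destruct (Hs (mkposreal (L/2) ltac:(lra))) as [N1 HN1]. simpl in HN1.
  set (N := max N1 1).
  assert (Hev : forall n, (N <= n)%nat -> 0 < x n /\ 1 <= INR n /\
     / bpow n (x n) - 1 = INR n * (/ x n - 1)).
  { intros n Hn.
    assert (n1 : (1 <= n)%nat) by (unfold N in Hn; pose proof (Nat.le_max_r N1 1); lia).
    assert (n2 : (N1 <= n)%nat) by (unfold N in Hn; pose proof (Nat.le_max_l N1 1); lia).
    specialize (HN1 n n2). apply Rabs_def2 in HN1. destruct HN1 as [HN1a HN1b].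
    assert (Hx0 : x n <> 0).
    { intro e. destruct n as [|m]; [lia|]. rewrite e, bpow_zero in HN1b. lra. }
    assert (Hxp : 0 < x n <= 1) by (specialize (Hx n); lra).
    split; [lra|]. split. { apply (le_INR 1 n) in n1. simpl in n1. lra. }
    rewrite bpow_formula by exact Hxp. rewrite Rinv_inv. ring. }
  assert (Hh0 : is_lim_seq (fun n => hh (x n)) 0).
  { apply is_lim_seq_le_le_loc with (u := fun _ => 0)
      (w := fun n => (/ bpow n (x n) - 1) * / INR n).
    - exists N. intros n Hn. destruct (Hev n Hn) as [h1 [h2 h3]].
      rewrite h3. pose proof (hh_bounds (x n) ltac:(specialize (Hx n); lra)).
      split; [lra|]. replace (INR n * (/ x n - 1) * / INR n) with (/ x n - 1) by (field; lra). lra.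
    - apply is_lim_seq_const.
    - replace 0 with (c * 0) by ring. apply is_lim_seq_mult'; [exact Hw|exact inv_INR_lim]. }
  apply is_lim_seq_le_le_loc with (u := fun n => (/ bpow n (x n) - 1) * (1 - hh (x n)))
     (w := fun n => / bpow n (x n) - 1).
  - exists N. intros n Hn. destruct (Hev n Hn) as [h1 [h2 h3]].
    rewrite h3. pose proof (hh_bounds (x n) ltac:(specialize (Hx n); lra)) as [b1 [b2 b3]].
    split; nra.
  - pose proof (is_lim_seq_mult' _ _ _ _ Hw (is_lim_seq_minus' _ _ _ _ (is_lim_seq_const 1) Hh0)) as HH.
    replace (c * (1-0)) with c in HH by ring. exact HH.
  - exact Hw.
Qed.

Lemma conv_bwd (x : nat -> R) (c : R) : (forall n, 0 <= x n <= 1) -> 0 < c ->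
  is_lim_seq (fun n => INR n * hh (x n)) c -> is_lim_seq (fun n => bpow n (x n)) (/(1+c)).
Proof.
  intros Hx Hc H.
  assert (Hh0 : is_lim_seq (fun n => hh (x n)) 0).
  { apply is_lim_seq_ext_loc with (u := fun n => (INR n * hh (x n)) * / INR n).
    - exists 1%nat. intros n Hn. apply (le_INR 1 n) in Hn. simpl in Hn. field. lra.
    - replace 0 with (c * 0) by ring. apply is_lim_seq_mult'; [exact H|exact inv_INR_lim]. }
  pose proof Hh0 as Hs. apply is_lim_seq_spec in Hs.
  destruct (Hs (mkposreal (1/2) ltac:(lra))) as [N HN]. simpl in HN.
  assert (Hev : forall n, (N <= n)%nat -> 0 < x n <= 1 /\ hh (x n) < 1/2).
  { intros n Hn. specialize (HN n Hn). apply Rabs_def2 in HN. destruct HN as [HN HNb].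
    assert (x n <> 0).
    { intro e. unfold hh in HN. rewrite e in HN. destruct (Req_EM_T 0 0); lra. }
    specialize (Hx n). lra. }
  assert (Hv : is_lim_seq (fun n => INR n * (/ x n - 1)) c).
  { apply is_lim_seq_le_le_loc with (u := fun n => INR n * hh (x n))
      (w := fun n => INR n * hh (x n) / (1 - hh (x n))).
    - exists N. intros n Hn. destruct (Hev n Hn) as [h1 h2].
      pose proof (hh_bounds (x n) h1) as [b1 [b2 b3]].
      pose proof (pos_INR n).
      split. { apply Rmult_le_compat_l; lra. }
      unfold Rdiv. rewrite Rmult_assoc. apply Rmult_le_compat_l; [lra|].
      apply (Rmult_le_reg_r (1 - hh (x n))); [lra|].
      rewrite Rmult_assoc, Rinv_l by lra. lra.
    - exact H.
    - pose proof (is_lim_seq_div' _ _ _ _ H (is_lim_seq_minus' _ _ _ _ (is_lim_seq_const 1) Hh0)) as HH.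
      replace (c / (1-0)) with c in HH by field. apply HH. lra. }
  apply is_lim_seq_ext_loc with (u := fun n => / (1 + INR n * (/ x n - 1))).
  - exists N. intros n Hn. destruct (Hev n Hn) as [h1 h2]. rewrite bpow_formula; auto.
  - assert (Hp : is_lim_seq (fun n => 1 + INR n * (/ x n - 1)) (1 + c)).
    { apply is_lim_seq_plus'; [apply is_lim_seq_const|exact Hv]. }
    pose proof (is_lim_seq_inv _ _ Hp) as H'. simpl in H'. apply H'.
    intro e. injection e. lra.
Qed.

Lemma H_range G t : Delta_plus G -> 0 <= t -> 0 <= h_of G t <= 1.
Proof. intros [HG _] Ht. rewrite h_of_hh. apply hh_range, HG, Ht. Qed.

Lemma H_mono G p q : Delta_plus G -> 0 <= p -> p <= q -> h_of G q <= h_of G p.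
Proof.
  intros HD Hp Hpq. destruct HD as [HG [Hm _]]. rewrite !h_of_hh.
  apply hh_mono. split. apply (HG p Hp). apply Hm; lra. apply HG. lra.
Qed.

Lemma H_lim0 G : Delta_plus G -> forall eps, 0 < eps -> exists M, forall t, M < t -> h_of G t < eps.
Proof.
  intros HD eps Heps. destruct HD as [HG [_ [_ Hl]]].
  apply is_lim_spec in Hl.
  destruct (Hl (mkposreal (Rmin (1/2) (eps/2)) ltac:(apply Rmin_pos; lra))) as [M HM].
  exists (Rmax M 0). intros t Ht.
  assert (Ht1 : M < t) by (pose proof (Rmax_l M 0); lra).
  assert (Ht0 : 0 <= t) by (pose proof (Rmax_r M 0); lra).
  specialize (HM t Ht1). simpl in HM. apply Rabs_def2 in HM. destruct HM as [HM1 HM2].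
  pose proof (Rmin_l (1/2) (eps/2)). pose proof (Rmin_r (1/2) (eps/2)).
  specialize (HG t Ht0).
  assert (Hx : 0 < G t <= 1) by lra.
  destruct (hh_bounds _ Hx) as [b1 [b2 b3]]. rewrite h_of_hh.
  assert (/ G t - 1 <= 2 * (1 - G t)).
  { assert (/ G t <= 2) by (rewrite <- (Rinv_inv 2); apply Rinv_le_contravar; lra).
    replace (/ G t - 1) with ((1 - G t) * / G t) by (field; lra). nra. }
  lra.
Qed.

Lemma disc_ivt (P : nat -> Prop) N K : P N -> ~ P K -> (N <= K)%nat ->
  exists n, (N <= n)%nat /\ P n /\ ~ P (S n).
Proof.
  intros HN HK. induction K as [|k IH]; intros HNK.
  - assert (N = 0%nat) by lia. subst. contradiction.
  - destruct (Nat.eq_dec N (S k)) as [e|ne]. { subst. contradiction. }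
    destruct (classic (P k)) as [Pk|nPk].
    + exists k. split; [lia|]. auto.
    + apply IH; auto. lia.
Qed.

Lemma div_le a b c d : 0 <= a <= c -> 0 < d <= b -> a / b <= c / d.
Proof.
  intros [H1 H2] [H3 H4]. unfold Rdiv.
  apply Rmult_le_compat; try lra.
  left. apply Rinv_0_lt_compat; lra.
  apply Rinv_le_contravar; lra.
Qed.

Lemma Rpower_1_base y : Rpower 1 y = 1.
Proof. unfold Rpower. rewrite ln_1, Rmult_0_r. apply exp_0. Qed.

Lemma Rpower_pos x y : 0 < Rpower x y.
Proof. unfold Rpower. apply exp_pos. Qed.

Lemma max3 a b c n : (Nat.max (Nat.max a b) c <= n)%nat -> (a <= n /\ b <= n /\ c <= n)%nat.
Proof. intros. pose proof (Nat.le_max_l (Nat.max a b) c). pose proof (Nat.le_max_r (Nat.max a b) c).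
  pose proof (Nat.le_max_l a b). pose proof (Nat.le_max_r a b). lia. Qed.

Lemma fwd alpha G : 0 < alpha -> Delta_plus G -> in_BMDA G (F_alpha alpha) -> reg_var alpha (h_of G).
Proof.
  intros Hal HD [a [Ha Hl]].
  pose proof HD as [HG [Hm _]].
  assert (Hseq : forall t, 0 < t -> is_lim_seq (fun n => INR n * h_of G (a n * t)) (Rpower t (-alpha))).
  { intros t Ht. apply (conv_fwd (fun n => G (a n * t))).
    - intro n. apply HG. pose proof (Ha n). nra.
    - apply Rpower_pos.
    - pose proof (Hl t ltac:(lra)) as H. unfold bmaxconv_pow, F_alpha in H.
      destruct (Rlt_dec 0 t); [exact H|lra]. }
  assert (H1 : is_lim_seq (fun n => INR n * h_of G (a n)) 1).
  { pose proof (Hseq 1 ltac:(lra)) as H. rewrite Rpower_1_base in H.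
    eapply is_lim_seq_ext; [|exact H]. intro n. simpl. rewrite Rmult_1_r. reflexivity. }
  assert (Hh0 : is_lim_seq (fun n => h_of G (a n)) 0).
  { apply is_lim_seq_ext_loc with (u := fun n => (INR n * h_of G (a n)) * / INR n).
    - exists 1%nat. intros n Hn. apply (le_INR 1 n) in Hn. simpl in Hn. field. lra.
    - replace 0 with (1 * 0) by ring. apply is_lim_seq_mult'; [exact H1|exact inv_INR_lim]. }
  pose proof Hh0 as Hh0s. apply is_lim_seq_spec in Hh0s.
  pose proof H1 as H1s. apply is_lim_seq_spec in H1s.
  assert (Hpos : forall s, 0 < s -> 0 < h_of G s).
  { intros s0 Hs0. apply Rnot_le_lt. intro Hle.
    assert (Hz0 : h_of G s0 = 0) by (pose proof (H_range G s0 HD ltac:(lra)); lra).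
    assert (Hzero : forall s, s0 <= s -> h_of G s = 0).
    { intros s Hs. pose proof (H_range G s HD ltac:(lra)). pose proof (H_mono G s0 s HD ltac:(lra) Hs). lra. }
    assert (Hall : forall s, 0 < s -> h_of G s = 0).
    { intros s Hs. apply Rle_antisym; [|apply (H_range G s HD); lra].
      apply Rnot_lt_le. intro Hps.
      set (t := s0 / s).
      assert (Ht : 0 < t) by (unfold t; apply Rdiv_lt_0_compat; lra).
      pose proof (Hseq t Ht) as Hst. apply is_lim_seq_spec in Hst.
      destruct (Hst (mkposreal _ (Rpower_pos t (-alpha)))) as [N1 HN1].
      destruct (Hh0s (mkposreal _ Hps)) as [N2 HN2].
      set (n := Nat.max N1 N2).
      specialize (HN1 n ltac:(apply Nat.le_max_l)). specialize (HN2 n ltac:(apply Nat.le_max_r)).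
      simpl in HN1, HN2. apply Rabs_def2 in HN1. apply Rabs_def2 in HN2.
      destruct HN1 as [_ HN1]. destruct HN2 as [HN2 _].
      assert (Hant : a n * t < s0).
      { apply Rnot_le_lt. intro Hge. rewrite (Hzero _ Hge) in HN1. lra. }
      assert (Hans : a n < s).
      { unfold t in Hant. apply (Rmult_lt_reg_r (s0 / s)). exact Ht.
        replace (s * (s0 / s)) with s0 by (field; lra). exact Hant. }
      pose proof (H_mono G (a n) s HD ltac:(pose proof (Ha n); lra) ltac:(lra)). lra. }
    destruct (H1s (mkposreal (1/2) ltac:(lra))) as [N HN].
    specialize (HN N (Nat.le_refl N)). simpl in HN. rewrite (Hall _ (Ha N)) in HN.
    rewrite Rmult_0_r in HN. apply Rabs_def2 in HN. lra. }
  assert (Hinf : forall M, exists N, forall n, (N <= n)%nat -> M < a n).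
  { intros M. set (M' := Rmax M 0 + 1).
    assert (HM' : 0 < M') by (unfold M'; pose proof (Rmax_r M 0); lra).
    destruct (Hh0s (mkposreal _ (Hpos M' HM'))) as [N HN]. exists N. intros n Hn.
    specialize (HN n Hn). simpl in HN. apply Rabs_def2 in HN. destruct HN as [HN _].
    apply Rnot_le_lt. intro Hle.
    assert (a n <= M') by (unfold M'; pose proof (Rmax_l M 0); lra).
    pose proof (H_mono G (a n) M' HD ltac:(pose proof (Ha n); lra) H). lra. }
  intros x Hx. apply is_lim_spec. intro eps. simpl.
  set (L := Rpower x (-alpha)).
  assert (HA := Hseq x Hx). fold L in HA.
  assert (HA' : is_lim_seq (fun n => INR (S n) * h_of G (a (S n) * x)) L)
    by (apply (is_lim_seq_incr_1 (fun n => INR n * h_of G (a n * x))); exact HA).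
  assert (HB' : is_lim_seq (fun n => INR (S n) * h_of G (a (S n))) 1)
    by (apply (is_lim_seq_incr_1 (fun n => INR n * h_of G (a n))); exact H1).
  assert (Hi1 : is_lim_seq (fun n => 1 + / INR n) 1).
  { pose proof (is_lim_seq_plus' _ _ _ _ (is_lim_seq_const 1) inv_INR_lim) as HH.
    rewrite Rplus_0_r in HH. exact HH. }
  assert (HU : is_lim_seq (fun n => (INR n * h_of G (a n * x)) / (INR (S n) * h_of G (a (S n))) * (1 + / INR n)) L).
  { pose proof (is_lim_seq_mult' _ _ _ _ (is_lim_seq_div' _ _ _ _ HA HB' ltac:(lra)) Hi1) as HH.
    replace (L / 1 * 1) with L in HH by field. exact HH. }
  assert (HDn : is_lim_seq (fun n => (INR (S n) * h_of G (a (S n) * x)) / (INR n * h_of G (a n)) / (1 + / INR n)) L).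
  { pose proof (is_lim_seq_div' _ _ _ _ (is_lim_seq_div' _ _ _ _ HA' H1 ltac:(lra)) Hi1 ltac:(lra)) as HH.
    replace (L / 1 / 1) with L in HH by field. exact HH. }
  apply is_lim_seq_spec in HU. apply is_lim_seq_spec in HDn.
  destruct (HU eps) as [N1 HN1]. destruct (HDn eps) as [N2 HN2].
  set (N := Nat.max (Nat.max N1 N2) 1).
  exists (a N). intros s Hs.
  assert (Hs0 : 0 < s) by (pose proof (Ha N); lra).
  destruct (Hinf s) as [N3 HN3].
  destruct (disc_ivt (fun m => a m <= s) N (Nat.max N N3) ltac:(simpl; lra)
    ltac:(simpl; specialize (HN3 (Nat.max N N3) (Nat.le_max_r _ _)); lra) (Nat.le_max_l _ _))
    as [n [Hn [Hans Hasn]]].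
  apply Rnot_le_lt in Hasn.
  destruct (max3 _ _ _ _ Hn) as [n1 [n2 n3]].
  specialize (HN1 n n1). specialize (HN2 n n2).
  apply Rabs_def2 in HN1. apply Rabs_def2 in HN2.
  destruct HN1 as [HN1 _]. destruct HN2 as [_ HN2].
  assert (HnR : 1 <= INR n) by (apply (le_INR 1 n) in n3; simpl in n3; lra).
  pose proof (Ha n) as Han. pose proof (Ha (S n)) as HaSn.
  pose proof (Hpos _ Han) as P1. pose proof (Hpos _ HaSn) as P2. pose proof (Hpos _ Hs0) as P3.
  assert (HSn : INR (S n) = INR n + 1) by apply S_INR.
  assert (EU : (INR n * h_of G (a n * x)) / (INR (S n) * h_of G (a (S n))) * (1 + / INR n)
     = h_of G (a n * x) / h_of G (a (S n))).
  { rewrite HSn. field. lra. }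
  assert (ED : (INR (S n) * h_of G (a (S n) * x)) / (INR n * h_of G (a n)) / (1 + / INR n)
     = h_of G (a (S n) * x) / h_of G (a n)).
  { rewrite HSn. field. repeat split; try lra. }
  rewrite EU in HN1. rewrite ED in HN2.
  assert (Up : h_of G (s * x) / h_of G s <= h_of G (a n * x) / h_of G (a (S n))).
  { apply div_le.
    - split. apply (H_range G _ HD). nra. apply H_mono; auto. nra. nra.
    - split; auto. apply H_mono; auto; lra. }
  assert (Lo : h_of G (a (S n) * x) / h_of G (a n) <= h_of G (s * x) / h_of G s).
  { apply div_le.
    - split. apply (H_range G _ HD). nra. apply H_mono; auto. nra. nra.
    - split; auto. apply H_mono; auto; lra. }
  apply Rabs_def1; lra.
Qed.

Lemma Hbig c : 0 < c -> exists N, forall n, (N <= n)%nat -> 1 < INR n * c.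
Proof.
  intros Hc. pose proof is_lim_seq_INR as H. apply is_lim_seq_spec in H.
  destruct (H (/ c)) as [N HN]. exists N. intros n Hn. specialize (HN n Hn).
  apply (Rmult_lt_compat_r c) in HN; auto. rewrite Rinv_l in HN; lra.
Qed.

Lemma seq_scal_inf (a : nat -> R) c : 0 < c ->
  (forall M, exists N, forall n, (N <= n)%nat -> M < a n) ->
  is_lim_seq (fun n => a n * c) p_infty.
Proof.
  intros Hc Ha. apply is_lim_seq_spec. intro M. destruct (Ha (M / c)) as [N HN].
  exists N. intros n Hn. specialize (HN n Hn).
  apply (Rmult_lt_compat_r c) in HN; auto. replace (M / c * c) with M in HN by (field; lra). exact HN.
Qed.

Lemma bwd alpha G : 0 < alpha -> Delta_plus G -> reg_var alpha (h_of G) -> in_BMDA G (F_alpha alpha).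
Proof.
  intros Hal HD Hrv.
  pose proof HD as [HG [Hm _]].
  set (h := h_of G).
  assert (Hpos : forall t, 0 <= t -> 0 < h t).
  { intros T HT. apply Rnot_le_lt. intro Hle.
    assert (Hz0 : h T = 0) by (pose proof (H_range G T HD HT); unfold h in *; lra).
    assert (Hzero : forall s, T <= s -> h s = 0).
    { intros s Hs. pose proof (H_range G s HD ltac:(lra)). pose proof (H_mono G T s HD HT Hs).
      unfold h in *; lra. }
    pose proof (Hrv 2 ltac:(lra)) as H2. apply is_lim_spec in H2.
    destruct (H2 (mkposreal _ (Rpower_pos 2 (-alpha)))) as [M HM].
    set (y := Rmax M T + 1).
    assert (HyM : M < y) by (unfold y; pose proof (Rmax_l M T); lra).
    assert (HyT : T <= y) by (unfold y; pose proof (Rmax_r M T); lra).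
    specialize (HM y HyM). simpl in HM.
    fold h in HM. rewrite (Hzero y HyT), (Hzero (y * 2)) in HM by lra.
    unfold Rdiv in HM. rewrite Rmult_0_l, Rminus_0_l, Rabs_Ropp, Rabs_pos_eq in HM.
    lra. left; apply Rpower_pos. }
  assert (Hexa : forall n : nat, {b | 0 < b /\ (1 < INR n * h 1 ->
      (forall s, 0 <= s < b -> 1 < INR n * h s) /\ (forall s, b < s -> INR n * h s <= 1))}).
  { intro n. apply constructive_indefinite_description.
    destruct (Rlt_dec 1 (INR n * h 1)) as [Hn1|Hn1].
    - set (E := fun s => 0 <= s /\ 1 < INR n * h s).
      assert (HnP : 0 < INR n).
      { destruct (Rle_lt_dec (INR n) 0) as [l|l]; auto. pose proof (pos_INR n).
        assert (INR n = 0) by lra. rewrite H0 in Hn1. lra. }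
      destruct (H_lim0 G HD (/ INR n) ltac:(apply Rinv_0_lt_compat; lra)) as [M0 HM0].
      assert (Hb : bound E).
      { exists (Rmax M0 0). intros s [Hs0 Hs1]. apply Rnot_lt_le. intro Hlt.
        assert (M0 < s) by (pose proof (Rmax_l M0 0); lra).
        specialize (HM0 s H). fold h in HM0.
        apply (Rmult_lt_compat_l (INR n)) in HM0; auto. rewrite Rinv_r in HM0; lra. }
      assert (E1 : E 1) by (split; [lra|exact Hn1]).
      destruct (completeness E Hb (ex_intro _ 1 E1)) as [b [Hub Hlub]].
      assert (Hb1 : 1 <= b) by (apply Hub; exact E1).
      exists b. split; [lra|]. intros _. split.
      + intros s [Hs0 Hsb]. apply Rnot_le_lt. intro Hle.
        assert (Hubs : is_upper_bound E s).
        { intros e [He0 He1]. destruct (Rle_dec e s) as [r|r]; auto.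
          pose proof (H_mono G s e HD Hs0 ltac:(lra)). fold h in H.
          assert (INR n * h e <= INR n * h s) by (apply Rmult_le_compat_l; lra). lra. }
        specialize (Hlub s Hubs). lra.
      + intros s Hs. apply Rnot_lt_le. intro Hlt.
        assert (E s) by (split; [lra|exact Hlt]). specialize (Hub s H). lra.
    - exists 1. split; [lra|]. intro; contradiction. }
  set (a := fun n => proj1_sig (Hexa n)).
  assert (Ha : forall n, 0 < a n) by (intro n; exact (proj1 (proj2_sig (Hexa n)))).
  assert (Hap : forall n, 1 < INR n * h 1 ->
      (forall s, 0 <= s < a n -> 1 < INR n * h s) /\ (forall s, a n < s -> INR n * h s <= 1)).
  { intro n. exact (proj2 (proj2_sig (Hexa n))). }
  assert (Hinf : forall M, exists N, forall n, (N <= n)%nat -> M < a n).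
  { intros M. set (M' := Rmax M 1 + 1).
    assert (HM1 : 1 <= M') by (unfold M'; pose proof (Rmax_r M 1); lra).
    assert (HMM : M < M') by (unfold M'; pose proof (Rmax_l M 1); lra).
    destruct (Hbig _ (Hpos M' ltac:(lra))) as [N HN]. exists N. intros n Hn.
    specialize (HN n Hn).
    assert (H1n : 1 < INR n * h 1).
    { pose proof (H_mono G 1 M' HD ltac:(lra) HM1). fold h in H. pose proof (pos_INR n).
      assert (INR n * h M' <= INR n * h 1) by (apply Rmult_le_compat_l; lra). lra. }
    destruct (Hap n H1n) as [_ Hr]. apply Rnot_le_lt. intro Hle.
    specialize (Hr M' ltac:(lra)). lra. }
  assert (HB : is_lim_seq (fun n => INR n * h (a n)) 1).
  { apply is_lim_seq_spec. intro eps.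
    set (d := Rmin (1/2) (eps/4)).
    assert (Hd : 0 < d) by (unfold d; apply Rmin_pos; pose proof (cond_pos eps); lra).
    assert (Hd1 : d <= 1/2) by apply Rmin_l. assert (Hd2 : d <= eps/4) by apply Rmin_r.
    set (y := exp (d / alpha)).
    assert (Hy : 1 < y).
    { unfold y. rewrite <- exp_0. apply exp_increasing. apply Rdiv_lt_0_compat; lra. }
    assert (Lly : ln y = d / alpha) by (unfold y; apply ln_exp).
    assert (E1 : Rpower y (-alpha) = exp (-d)).
    { unfold Rpower. rewrite Lly. f_equal. field. lra. }
    assert (E2 : Rpower (/ y) (-alpha) = exp d).
    { unfold Rpower. rewrite ln_Rinv by lra. rewrite Lly. f_equal. field. lra. }
    assert (Hlo : is_lim_seq (fun n => h (a n * / y * y) / h (a n * / y)) (exp (-d))).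
    { rewrite <- E1.
      apply (is_lim_comp_seq (fun s => h (s * y) / h s) (fun n => a n * / y) p_infty).
      - apply Hrv. lra.
      - exists 0%nat. intros. discriminate.
      - apply seq_scal_inf; auto. apply Rinv_0_lt_compat; lra. }
    assert (Hup : is_lim_seq (fun n => h (a n * y * / y) / h (a n * y)) (exp d)).
    { rewrite <- E2.
      apply (is_lim_comp_seq (fun s => h (s * / y) / h s) (fun n => a n * y) p_infty).
      - apply Hrv. apply Rinv_0_lt_compat; lra.
      - exists 0%nat. intros. discriminate.
      - apply seq_scal_inf; auto. lra. }
    apply is_lim_seq_spec in Hlo. apply is_lim_seq_spec in Hup.
    destruct (Hlo (mkposreal (eps/4) ltac:(pose proof (cond_pos eps); lra))) as [N1 HN1].
    destruct (Hup (mkposreal (eps/2) ltac:(pose proof (cond_pos eps); lra))) as [N2 HN2].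
    destruct (Hbig _ (Hpos 1 ltac:(lra))) as [N3 HN3].
    exists (Nat.max (Nat.max N1 N2) N3). intros n Hn.
    destruct (max3 _ _ _ _ Hn) as [n1 [n2 n3]].
    specialize (HN1 n n1). specialize (HN2 n n2). specialize (HN3 n n3).
    simpl in HN1, HN2. apply Rabs_def2 in HN1. apply Rabs_def2 in HN2.
    destruct HN1 as [_ HN1]. destruct HN2 as [HN2 _].
    assert (e1 : a n * / y * y = a n) by (field; lra).
    assert (e2 : a n * y * / y = a n) by (field; lra).
    rewrite e1 in HN1. rewrite e2 in HN2.
    pose proof (Ha n) as Han.
    assert (q1 : 0 <= a n * / y < a n).
    { split. left. apply Rmult_lt_0_compat; auto. apply Rinv_0_lt_compat; lra.
      apply (Rmult_lt_reg_r y); [lra|]. rewrite e1. nra. }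
    assert (q2 : a n < a n * y) by nra.
    destruct (Hap n HN3) as [Hl Hr].
    specialize (Hl _ q1). specialize (Hr _ q2).
    pose proof (Hpos (a n) ltac:(lra)) as p0.
    pose proof (Hpos (a n * / y) ltac:(lra)) as p1.
    pose proof (Hpos (a n * y) ltac:(nra)) as p2.
    assert (B1 : INR n * h (a n) = (INR n * h (a n * / y)) * (h (a n) / h (a n * / y))) by (field; lra).
    assert (B2 : INR n * h (a n) = (INR n * h (a n * y)) * (h (a n) / h (a n * y))) by (field; lra).
    assert (r1 : 0 < h (a n) / h (a n * / y)) by (apply Rdiv_lt_0_compat; lra).
    assert (r2 : 0 < h (a n) / h (a n * y)) by (apply Rdiv_lt_0_compat; lra).
    pose proof (pos_INR n).
    assert (Lo : h (a n) / h (a n * / y) < INR n * h (a n)) by (rewrite B1; nra).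
    assert (Up : INR n * h (a n) <= h (a n) / h (a n * y)).
    { rewrite B2. assert (0 <= INR n * h (a n * y)) by nra. nra. }
    pose proof (exp_ineq1_le (-d)). pose proof (exp_pos d). pose proof (exp_pos (-d)).
    assert (Ed : exp d * exp (-d) = 1).
    { rewrite <- exp_plus. replace (d + - d) with 0 by ring. apply exp_0. }
    assert (exp d <= 1 + 2 * d) by nra.
    apply Rabs_def1; lra. }
  assert (Hseq : forall t, 0 < t -> is_lim_seq (fun n => INR n * h (a n * t)) (Rpower t (-alpha))).
  { intros t Ht.
    apply is_lim_seq_ext with (u := fun n => (INR n * h (a n)) * (h (a n * t) / h (a n))).
    { intro n. pose proof (Hpos (a n) ltac:(pose proof (Ha n); lra)). field. lra. }
    pose proof (is_lim_seq_mult' _ _ _ _ HB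
      (is_lim_comp_seq (fun s => h (s * t) / h s) a p_infty _ (Hrv t Ht)
         ltac:(exists 0%nat; intros; discriminate)
         ltac:(apply is_lim_seq_spec; intro M; exact (Hinf M)))) as HH.
    rewrite Rmult_1_l in HH. exact HH. }
  exists a. split; [exact Ha|]. intros t Ht.
  destruct (Req_dec t 0) as [e|ne].
  - subst t. unfold F_alpha. destruct (Rlt_dec 0 0) as [r|_]; [lra|].
    unfold bmaxconv_pow.
    apply is_lim_seq_ext with (u := fun n => bpow n (G 0)).
    { intro n. rewrite Rmult_0_r. reflexivity. }
    assert (HG0 : G 0 < 1).
    { pose proof (HG 0 ltac:(lra)). destruct (Req_dec (G 0) 1) as [e|ne]; [|lra].
      pose proof (Hpos 0 ltac:(lra)). unfold h in H0. rewrite h_of_hh, e, hh_one in H0. lra. }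
    destruct (Req_dec (G 0) 0) as [z|nz].
    + apply is_lim_seq_ext_loc with (u := fun _ => 0); [|apply is_lim_seq_const].
      exists 1%nat. intros n Hn. destruct n as [|m]; [lia|]. rewrite z, bpow_zero. reflexivity.
    + assert (Hx : 0 < G 0 <= 1) by (pose proof (HG 0 ltac:(lra)); lra).
      pose proof (v_nonneg _ Hx).
      assert (Hv : 0 < / G 0 - 1).
      { assert (1 < / G 0) by (rewrite <- Rinv_1; apply Rinv_lt_contravar; lra). lra. }
      apply is_lim_seq_le_le_loc with (u := fun _ => 0) (w := fun n => / (/ G 0 - 1) * / INR n).
      * exists 1%nat. intros n Hn. apply (le_INR 1 n) in Hn. simpl in Hn.
        rewrite bpow_formula by exact Hx.
        split. left. apply Rinv_0_lt_compat. nra.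
        rewrite <- Rinv_mult. apply Rinv_le_contravar; nra.
      * apply is_lim_seq_const.
      * pose proof (is_lim_seq_mult' _ _ _ _ (is_lim_seq_const (/ (/ G 0 - 1))) inv_INR_lim) as HH.
        rewrite Rmult_0_r in HH. exact HH.
  - assert (Htp : 0 < t) by lra.
    unfold F_alpha. destruct (Rlt_dec 0 t) as [_|r]; [|lra].
    unfold bmaxconv_pow.
    apply (conv_bwd (fun n => G (a n * t))).
    + intro n. apply HG. pose proof (Ha n). nra.
    + apply Rpower_pos.
    + exact (Hseq t Htp).
Qed.

Theorem corollary4p2 (alpha : R) (G : R -> R) :
  0 < alpha -> Delta_plus G ->
  (in_BMDA G (F_alpha alpha) <-> reg_var alpha (h_of G)).
Proof.
  intros Hal HD. split; [apply fwd | apply bwd]; assumption.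
Qed.
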